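(* Let $Z\subset\mathbb R^n$ be convex, for some $n\in\mathbb N$, and let $y\in Z$. The weight function $t_y:Z\to[0,1]$ is continuous (with respect to the Euclidean topology restricted to $Z$) if and only if $y\in Z\setminus\partial Z$.
   Context: For $x,y\in Z$ write $x\leq_C y$ if $y=tx+(1-t)z$ for some $z\in Z$ and $0<t\leq 1$; the boundary $\partial Z$ is the set of $y\in Z$ such that some $x\in Z$ has $x\not\leq_C y$. The weight function is $t_y(x)=\sup\{0\leq t<1 : \frac{y-tx}{1-t}\in Z\}$. *)

(* Defs.v *)
From HB Require Import structures.
From mathcomp Require Import all_boot all_order all_algebra.
From mathcomp Require Import all_classical all_reals all_analysis.
Set Implicit Arguments. Unset Strict Implicit. Unset Printing Implicit Defensive.
Import Order.TTheory GRing.Theory Num.Theory.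
Import numFieldNormedType.Exports.
Local Open Scope classical_set_scope.
Local Open Scope ring_scope.

Definition leC (R : realType) (n : nat) (Z : set 'rV[R]_n) (x y : 'rV[R]_n) : Prop :=
  exists z, Z z /\ exists t : R, 0 < t <= 1 /\ y = t *: x + (1 - t) *: z.

Definition boundaryC (R : realType) (n : nat) (Z : set 'rV[R]_n) : set 'rV[R]_n :=
  [set y | Z y /\ exists x, Z x /\ ~ leC Z x y].

Definition weight (R : realType) (n : nat) (Z : set 'rV[R]_n) (y x : 'rV[R]_n) : R :=
  sup [set t : R | 0 <= t < 1 /\ Z ((1 - t)^-1 *: (y - t *: x))].

(* Main.v *)
Require Import Defs.
From HB Require Import structures.
From mathcomp Require Import all_boot all_order all_algebra.
From mathcomp Require Import all_classical all_reals all_analysis.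
From mathcomp Require Import ring lra.
Import Order.TTheory GRing.Theory Num.Theory.
Import numFieldNormedType.Exports.
Local Open Scope classical_set_scope.
Local Open Scope ring_scope.
Set Implicit Arguments. Unset Strict Implicit. Unset Printing Implicit Defensive.

Section Prop9.
Variables (R : realType) (n : nat) (Z : set 'rV[R]_n) (y : 'rV[R]_n).
Hypothesis cZ : @convex_set R 'rV[R]_n Z.
Hypothesis Zy : Z y.

Lemma convZ a b l : Z a -> Z b -> 0 <= l -> l <= 1 ->
  Z (l *: a + (1 - l) *: b).
Proof.
move=> Za Zb l0 l1.
have := @cZ a b (Itv01 l0 l1) (mem_set Za) (mem_set Zb).
by rewrite inE.
Qed.

Lemma sub1_neq0 (t : R) : t < 1 -> 1 - t != 0.
Proof. by move=> h; rewrite gt_eqF // subr_gt0. Qed.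

Definition S x := [set t : R | 0 <= t < 1 /\ Z ((1 - t)^-1 *: (y - t *: x))].

Lemma weightE x : weight Z y x = sup (S x). Proof. by []. Qed.

Lemma S0 x : S x 0.
Proof. split; first by rewrite lexx ltr01. by rewrite subr0 invr1 scale0r subr0 scale1r. Qed.

Lemma S_ub x : has_ubound (S x).
Proof. by exists 1 => t [/andP[_ /ltW]]. Qed.

Lemma S_ne x : S x !=set0.
Proof. by exists 0; apply: S0. Qed.

Lemma w_ge0 x : 0 <= weight Z y x.
Proof. by rewrite weightE; apply: ub_le_sup (S_ub x) _ (S0 x). Qed.

Lemma w_le1 x : weight Z y x <= 1.
Proof. by rewrite weightE; apply: ge_sup; [exact: S_ne| move=> t [/andP[_ /ltW]]]. Qed.

Lemma S_le x t : S x t -> t <= weight Z y x.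
Proof. by move=> h; rewrite weightE; apply: ub_le_sup (S_ub x) _ h. Qed.

Lemma S_adh x e : 0 < e -> exists2 t, S x t & weight Z y x - e < t.
Proof. move=> e0; rewrite weightE; apply: sup_adherent => //; split; [exact: S_ne|exact: S_ub]. Qed.

Lemma S_down x t t' : S x t -> 0 <= t' -> t' <= t -> S x t'.
Proof.
move=> [/andP[t0 t1] Zt] t'0 t't.
have [->|tn0] := eqVneq t' 0; first exact: S0.
have t'pos : 0 < t' by rewrite lt_neqAle eq_sym tn0.
have tpos : 0 < t by apply: lt_le_trans t't.
have t'1 : t' < 1 by apply: le_lt_trans t1.
split; first by rewrite t'0 t'1.
set l := t' * (1 - t) / (t * (1 - t')).
have l0 : 0 <= l.
  by rewrite /l divr_ge0 // ?mulr_ge0 // ?subr_ge0 ltW.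
have l1 : l <= 1.
  rewrite /l ler_pdivrMr ?mulr_gt0 ?subr_gt0 // mul1r.
  by rewrite !mulrBr !mulr1 mulrC lerD2r.
have := convZ Zt Zy l0 l1.
congr Z; apply/rowP => j; rewrite !mxE /l.
field.
by rewrite !sub1_neq0 // (gt_eqF tpos).
Qed.


Lemma S_transfer a b ta tb : S a ta -> 0 <= tb -> tb < ta ->
  Z (y + (ta * tb / (ta - tb)) *: (a - b)) -> S b tb.
Proof.
move=> [/andP[ta0 ta1] Zta] tb0 tbta Zc.
have [->|tn0] := eqVneq tb 0; first exact: S0.
have tbpos : 0 < tb by rewrite lt_neqAle eq_sym tn0.
have tapos : 0 < ta by apply: le_lt_trans tbta.
have tb1 : tb < 1 by apply: lt_trans ta1.
split; first by rewrite tb0 tb1.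
set l := tb * (1 - ta) / (ta * (1 - tb)).
have l0 : 0 <= l.
  by rewrite /l divr_ge0 // ?mulr_ge0 // ?subr_ge0 ltW.
have l1 : l <= 1.
  rewrite /l ler_pdivrMr ?mulr_gt0 ?subr_gt0 // mul1r.
  by rewrite !mulrBr !mulr1 mulrC lerD2r ltW.
have := convZ Zta Zc l0 l1.
congr Z; apply/rowP => j; rewrite !mxE /l.
field.
by rewrite !sub1_neq0 // subr_eq0 (gt_eqF tbta) (gt_eqF tapos).
Qed.

Lemma basis_ex : exists m (B : 'M[R]_(m, n)),
  (forall i, Z (y + row i B)) /\ forall x, Z x -> (x - y <= B)%MS.
Proof.
pose P k := `[< exists m (B : 'M[R]_(m, n)),
   (forall i, Z (y + row i B)) /\ \rank B = k >].
have P0 : exists k, P k.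
  exists 0%N; apply/asboolP; exists 0%N, 0; split; last exact: mxrank0.
  by case.
have Pub : forall k, P k -> (k <= n)%N.
  by move=> k /asboolP[m [B [_ <-]]]; exact: rank_leq_col.
case: (ex_maxnP P0 Pub) => k /asboolP[m [B [HB rB]]] kmax.
exists m, B; split => // x Zx.
case: (boolP (x - y <= B)%MS) => // xB; exfalso.
pose B' := col_mx B (x - y).
have HB' : forall i, Z (y + row i B').
  move=> i; rewrite -(splitK i); case: (fintype.split i) => j /=.
    by rewrite rowKu.
  rewrite rowKd (ord1 j).
  have -> : row 0 (x - y) = x - y by apply/rowP => l; rewrite !mxE.
  by rewrite addrC subrK.
have sBB' : (B <= B')%MS by rewrite /B' -addsmxE addsmxSl.
have := mxrank_leqif_sup sBB'.
move=> [le eq].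
have ne : (\rank B != \rank B')%N.
  rewrite eq; apply: contra xB => /(submx_trans _); apply.
  by rewrite /B' -addsmxE addsmxSr.
have : P (\rank B') by apply/asboolP; exists (m + 1)%N, B'.
move/kmax; rewrite -rB => h.
by move: ne; rewrite eqn_leq le h.
Qed.

Lemma solve_lin (a b c d : R) : a != 0 -> b = c + a * d -> d = (b - c) / a.
Proof. by move=> a0 ->; field. Qed.

Lemma sigma_ex m (B : 'M[R]_(m, n)) : ~ boundaryC Z y ->
  (forall i, Z (y + row i B)) ->
  exists2 sg, 0 < sg & forall i tau, `|tau| <= sg -> Z (y + tau *: row i B).
Proof.
move=> nb HB.
have h : forall i, exists s : R, 0 < s /\ Z (y - s *: row i B).
  move=> i; have Zx := HB i.
  have : leC Z (y + row i B) y.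
    by apply: contrapT => nl; apply: nb; split => //; exists (y + row i B).
  case=> z [Zz [t [/andP[t0 t1] ey]]].
  have [t_1|tn1] := eqVneq t 1.
    exists 1; split => //.
    have -> : row i B = 0.
      apply/rowP => j; move/rowP: ey => /(_ j); rewrite !mxE t_1 => e.
      lra.
    by rewrite scaler0 subr0.
  have t1' : t < 1 by rewrite lt_neqAle tn1.
  exists (t / (1 - t)); split; first by rewrite divr_gt0 // subr_gt0.
  congr Z: Zz; apply/rowP => j; move/rowP: ey => /(_ j); rewrite !mxE => e.
  rewrite (solve_lin (sub1_neq0 t1') e); field.
  by rewrite sub1_neq0.
case/fin_all_exists: h => sig hsig.
pose sg := (1 + \sum_i (sig i)^-1)^-1.
have sum0 : 0 <= \sum_i (sig i)^-1.
  by apply: sumr_ge0 => i _; rewrite invr_ge0 ltW //; case: (hsig i).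
have sgpos : 0 < sg by rewrite /sg invr_gt0 ltr_wpDr.
exists sg => // i tau htau.
have [sigpos Zs] := hsig i.
have sgle1 : sg <= 1.
  by rewrite /sg invf_le1 ?ltr_wpDr // lerDl.
have sgle : sg <= sig i.
  rewrite /sg -(invrK (sig i)) lef_pV2 ?posrE ?invr_gt0 ?ltr_wpDr //.
  rewrite (bigD1 i) //= addrCA lerDl addr_ge0 //.
  by apply: sumr_ge0 => k _; rewrite invr_ge0 ltW //; case: (hsig k).
have [tau0|tau0] := leP 0 tau.
  have tau1 : tau <= 1 by apply: le_trans sgle1; rewrite -(ger0_norm tau0).
  have := convZ (HB i) Zy tau0 tau1.
  by congr Z; apply/rowP => j; rewrite !mxE; ring.
have l0 : 0 <= - tau / sig i by rewrite divr_ge0 // ?oppr_ge0 ltW.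
have l1 : - tau / sig i <= 1.
  rewrite ler_pdivrMr // mul1r; apply: le_trans sgle.
  by rewrite -(ltr0_norm tau0).
have := convZ Zs Zy l0 l1.
congr Z; apply/rowP => j; rewrite !mxE; field.
by rewrite gt_eqF.
Qed.

Lemma conv_list (I : eqType) (s : seq I) (p : I -> R) (v : I -> 'rV[R]_n) :
  (forall i, 0 <= p i) -> (forall i, Z (y + v i)) ->
  \sum_(i <- s) p i <= 1 -> Z (y + \sum_(i <- s) p i *: v i).
Proof.
move=> + Zv; elim: s p => [|i s IH] p p0.
  by rewrite !big_nil addr0.
rewrite !big_cons => hs.
have P0 : 0 <= \sum_(j <- s) p j by apply: sumr_ge0.
have [Pe|Pn] := eqVneq (\sum_(j <- s) p j) 0.
  have -> : \sum_(j <- s) p j *: v j = 0.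
    apply: big1_seq => j /= js.
    move/eqP: Pe; rewrite psumr_eq0 //; move/allP/(_ j js)/eqP ->.
    by rewrite scale0r.
  have pi1 : p i <= 1 by move: hs; rewrite Pe addr0.
  have := convZ (Zv i) Zy (p0 i) pi1.
  by congr Z; apply/rowP => j; rewrite !mxE; ring.
have Ppos : 0 < \sum_(j <- s) p j by rewrite lt_neqAle eq_sym Pn.
have pi1 : p i < 1.
  by move: hs; rewrite -lerBrDl => h; rewrite -subr_gt0; apply: lt_le_trans h.
set q := fun j => p j / (1 - p i).
have q0 : forall j, 0 <= q j by move=> j; rewrite /q divr_ge0 // subr_ge0 ltW.
have qs : \sum_(j <- s) q j <= 1.
  rewrite /q -mulr_suml ler_pdivrMr ?subr_gt0 // mul1r lerBrDl.
  exact: hs.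
have Zw := IH q q0 qs.
have -> : \sum_(j <- s) p j *: v j = (1 - p i) *: \sum_(j <- s) q j *: v j.
  rewrite scaler_sumr; apply: eq_bigr => j _; rewrite scalerA /q.
  by rewrite mulrC divfK // sub1_neq0.
have := convZ (Zv i) Zw (p0 i) (ltW pi1).
by congr Z; apply/rowP => j; rewrite !mxE; ring.
Qed.

Lemma coord_le (u : 'rV[R]_n) j : `|u 0 j| <= `|u|.
Proof.
change (`|u 0 j| <= mx_norm u); rewrite mx_normrE; apply/bigmax_geP; right.
by exists (0, j).
Qed.

Lemma ball_lemma : ~ boundaryC Z y ->
  exists2 r, 0 < r & forall a b c, Z a -> Z b ->
    `|c| * `|a - b| <= r -> Z (y + c *: (a - b)).
Proof.
move=> nb.
case: basis_ex => m [B [HB Hsub]].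
case: (sigma_ex nb HB) => sg sg0 Hsg.
pose M := pinvmx B.
pose K := \sum_i \sum_j `|M j i|.
have K0 : 0 <= K by apply: sumr_ge0 => i _; apply: sumr_ge0.
exists (sg / (K + 1)); first by rewrite divr_gt0 // ltr_wpDl.
move=> a b c Za Zb hc.
set u := c *: (a - b).
have uB : (u <= B)%MS.
  have -> : u = c *: ((a - y) + (-1) *: (b - y)).
    by rewrite /u; congr (_ *: _); apply/rowP => j; rewrite !mxE; ring.
  apply: scalemx_sub; apply: addmx_sub; first exact: Hsub.
  by apply: scalemx_sub; apply: Hsub.
have nu : `|u| <= sg / (K + 1) by rewrite /u normrZ.
set cc := u *m M.
have ue : u = \sum_i cc 0 i *: row i B by rewrite -mulmx_sum_row mulmxKpV.
have bnd : \sum_i `|cc 0 i| <= K * `|u|.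
  rewrite /K mulr_suml; apply: ler_sum => i _.
  rewrite /cc mxE mulr_suml; apply: le_trans (ler_norm_sum _ _ _) _.
  apply: ler_sum => j _; rewrite normrM mulrC ler_wpM2l //.
  exact: coord_le.
have sumle : \sum_i `|cc 0 i| <= sg.
  apply: le_trans bnd _.
  apply: le_trans (ler_wpM2l K0 nu) _.
  rewrite mulrCA ger_pMr // ler_pdivrMr ?ltr_wpDl // mul1r lerDl //.
pose p i := `|cc 0 i| / sg.
pose v i := (if 0 <= cc 0 i then sg else - sg) *: row i B.
have p0 : forall i, 0 <= p i by move=> i; rewrite /p divr_ge0 // ltW.
have Zv : forall i, Z (y + v i).
  move=> i; apply: Hsg; case: ifP => _; first by rewrite ger0_norm // ltW.
  by rewrite normrN ger0_norm // ltW.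
have ps : \sum_i p i <= 1.
  by rewrite /p -mulr_suml ler_pdivrMr // mul1r.
have := conv_list p0 Zv ps.
congr Z; congr (_ + _); rewrite ue; apply: eq_bigr => i _.
rewrite /p /v scalerA; congr (_ *: _).
case: ifP => h; first by rewrite ger0_norm // divfK // gt_eqF.
rewrite ltr0_norm ?ltNge ?h //; field; by rewrite gt_eqF.
Qed.

Lemma cont_of_nb : ~ boundaryC Z y -> {within Z, continuous (weight Z y)}.
Proof.
move=> nb; case: (ball_lemma nb) => r r0 Hr.
apply/subspace_continuousP => x0 Zx0.
apply/cvgrPdist_lt => eps eps0.
rewrite near_withinE.
apply/(@nbhs_normP R _ x0).
rewrite /from_subspace.

have w00 := w_ge0 x0; have w01 := w_le1 x0.
set w0 := weight Z y x0 in w00 w01 *.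
have low : exists2 d, 0 < d & forall x, Z x -> `|x0 - x| < d ->
    w0 - eps < weight Z y x.
  have [tb0|tbn] := leP 0 (w0 - eps / 2); last first.
    by exists 1 => // x _ _; have := w_ge0 x; lra.
  have e4 : 0 < eps / 4 by rewrite divr_gt0.
  case: (S_adh x0 e4) => t1 St1 ht1; rewrite -/w0 in ht1.
  have tbt1 : w0 - eps / 2 < t1 by lra.
  set tb := w0 - eps / 2 in tb0 tbt1 *.
  set c := t1 * tb / (t1 - tb).
  have c0 : 0 <= c by rewrite /c; apply: divr_ge0; [apply: mulr_ge0|]; lra.
  exists (r / (c + 1)); first by rewrite divr_gt0 // ltr_wpDl.
  move=> x Zx hx.
  have Sx : S x tb.
    apply: (S_transfer St1 tb0 tbt1); apply: Hr Zx0 Zx _.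
    rewrite ger0_norm //; apply: le_trans (ler_wpM2l c0 (ltW hx)) _.
    rewrite mulrCA ger_pMr // ler_pdivrMr ?ltr_wpDl // mul1r lerDl //.
  by have := S_le Sx; rewrite /tb; lra.
have up : exists2 d, 0 < d & forall x, Z x -> `|x0 - x| < d ->
    weight Z y x < w0 + eps.
  have [ta1|ta1] := ltP (w0 + eps / 2) 1; last first.
    by exists 1 => // x _ _; have := w_le1 x; lra.
  have ta0 : 0 <= w0 + eps / 2 by lra.
  have tb0 : 0 <= w0 + eps / 4 by lra.
  have tbta : w0 + eps / 4 < w0 + eps / 2 by lra.
  set ta := w0 + eps / 2 in ta1 ta0 tbta *.
  set tb := w0 + eps / 4 in tb0 tbta *.
  set c := ta * tb / (ta - tb).
  have c0 : 0 <= c by rewrite /c; apply: divr_ge0; [apply: mulr_ge0|]; lra.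
  exists (r / (c + 1)); first by rewrite divr_gt0 // ltr_wpDl.
  move=> x Zx hx.
  rewrite ltNge; apply/negP => hw.
  have e2 : 0 < eps / 2 by rewrite divr_gt0.
  case: (S_adh x e2) => t St ht.
  have Sta : S x ta by apply: (S_down St ta0); rewrite /ta; lra.
  have Stb : S x0 tb.
    apply: (S_transfer Sta tb0 tbta); apply: Hr Zx Zx0 _.
    rewrite distrC ger0_norm //; apply: le_trans (ler_wpM2l c0 (ltW hx)) _.
    rewrite mulrCA ger_pMr // ler_pdivrMr ?ltr_wpDl // mul1r lerDl //.
  by have := S_le Stb; rewrite -/w0 /tb; lra.
case: low => d1 d10 hl; case: up => d2 d20 hu.
exists (Order.min d1 d2).
  by rewrite /= lt_min d10 d20.
move=> x /= hx Zx.
move: hx; rewrite lt_min => /andP[h1 h2].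
have := hl x Zx h1; have := hu x Zx h2.
rewrite ltr_norml; lra.
Qed.

Lemma nb_of_cont : {within Z, continuous (weight Z y)} -> ~ boundaryC Z y.
Proof.
move=> ct [_ [x [Zx nl]]].
have wy : weight Z y y = 1.
  apply/le_anti; rewrite w_le1 /=.
  rewrite leNgt; apply/negP => h.
  have w0 := w_ge0 y.
  have S' : S y ((weight Z y y + 1) / 2).
    split; first by apply/andP; split; lra.
    congr Z: Zy; apply/rowP => j; rewrite !mxE; field.
    rewrite gt_eqF //; lra.
  by have := S_le S'; lra.
have wl : forall l, 0 < l -> l <= 1 -> weight Z y (y + l *: (x - y)) = 0.
  move=> l l0 l1; apply/le_anti; rewrite w_ge0 andbT weightE.
  apply: ge_sup; first exact: S_ne.
  move=> t [/andP[t0 t1] Zt]; rewrite leNgt; apply/negP => tpos.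
  apply: nl; exists ((1 - t)^-1 *: (y - t *: (y + l *: (x - y)))); split => //.
  have d0 : 0 < 1 - t + t * l by have := mulr_gt0 tpos l0; lra.
  exists (t * l / (1 - t + t * l)); split.
    apply/andP; split; first by rewrite divr_gt0 // mulr_gt0.
    by rewrite ler_pdivrMr // mul1r; lra.
  apply/rowP => j; rewrite !mxE; field.
  by rewrite sub1_neq0 // gt_eqF.
move: ct => /subspace_continuousP /(_ y Zy) /cvgrPdist_lt.
have h2 : (0 : R) < 1 / 2 by lra.
move=> /(_ _ h2); rewrite near_withinE => /(@nbhs_normP R _ y) [e e0 he].
have nx := normr_ge0 (x - y).
set l := e / (e + `|x - y|).
have l0 : 0 < l by rewrite /l divr_gt0 // ltr_wpDr.
have l1 : l <= 1 by rewrite /l ler_pdivrMr ?mul1r ?lerDl ?normr_ge0 // ltr_wpDr.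
have Zxl : Z (y + l *: (x - y)).
  have := convZ Zx Zy (ltW l0) l1.
  by congr Z; apply/rowP => j; rewrite !mxE; ring.
have hb : ball_ Num.norm y e (y + l *: (x - y)).
  rewrite /ball_ /= opprD addrA subrr add0r normrN normrZ ger0_norm ?ltW //.
  rewrite /l mulrAC ltr_pdivrMr ?ltr_wpDr // ltr_pM2l //.
  by rewrite [e + _]addrC ltrDl.
have := he _ hb Zxl; rewrite /from_subspace wy wl // subr0 normr1; lra.
Qed.

Lemma both : {within Z, continuous (weight Z y)} <-> ~ boundaryC Z y.
Proof. by split; [exact: nb_of_cont | exact: cont_of_nb]. Qed.


End Prop9.

Theorem proposition9 (R : realType) (n : nat) (Z : set 'rV[R]_n) (y : 'rV[R]_n) :
  @convex_set R 'rV[R]_n Z -> Z y ->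
  ({within Z, continuous (weight Z y)} <-> ~ boundaryC Z y).
Proof. by move=> cZ Zy; exact: (@both R n Z y cZ Zy). Qed.
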